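(* There exists $K_0>0$ such that for every $R>2$ and every $y\in[2,3]$, the function $x\mapsto\sqrt{\iota_R(x,y)}$ is continuously differentiable on $[0,\infty)$ and for all $x\ge0$, $$0\le\partial_x\sqrt{\iota_R(x,y)}\le K_0\sqrt{y-2}\,g_R(x,y),\qquad 0\le\sqrt{\iota_R(x,y)}\le K_0\sqrt{y-2}\,\rho_R(x,y).$$
   Context: Let $\xi$ be a nondecreasing $C^2$ function on $[0,\infty)$ with $\xi(x)=(x-1)^3\vee0$ for $x\in[0,3/2]$ and $\xi(x)=1$ for $x\ge2$. For $x\ge0$, $y\ge2$: $\zeta(x,y)=2x+(yx^{y-1}-2x)\xi(x)$. For $R>2$: $g_R(x,y)=\sqrt{(\partial_x\zeta)(x\wedge R,y)}$, $h_R(x,y)=\int_0^xg_R(s,y)^2\,ds$, $\phi_R(x,y)=\int_0^xh_R(s,y)\,ds$, $\rho_R(x,y)=\int_0^xg_R(s,y)\,ds$, $\iota_R(x,y)=xh_R(x,y)-2\phi_R(x,y)$. *)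

(* Defs.v *)
From Stdlib Require Import Reals Lra ClassicalEpsilon.
Open Scope R_scope.

(* Real power x^a for x >= 0, with the convention 0^a = 0 (only used with a >= 0;
   the value at 0 never matters since xi vanishes near 0). *)
Definition rpow (x a : R) : R := if Rlt_dec 0 x then Rpower x a else 0.

Definition deriv_within_nonneg_at (F : R -> R) (x l : R) : Prop :=
  forall eps : R, 0 < eps -> exists delta : R, 0 < delta /\
    forall h : R, h <> 0 -> 0 <= x + h -> Rabs h < delta ->
      Rabs ((F (x + h) - F x) / h - l) < eps.

Definition has_deriv_on_nonneg (F D : R -> R) : Prop :=
  forall x : R, 0 <= x -> deriv_within_nonneg_at F x (D x).

Definition continuous_on_nonneg (D : R -> R) : Prop :=
  forall x : R, 0 <= x -> forall eps : R, 0 < eps -> exists delta : R, 0 < delta /\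
    forall z : R, 0 <= z -> Rabs (z - x) < delta -> Rabs (D z - D x) < eps.

(* The derivative of F at x within [0,+oo) (chosen by epsilon; unique when it exists). *)
Definition deriv_nonneg (F : R -> R) (x : R) : R :=
  epsilon (inhabits 0) (fun l => deriv_within_nonneg_at F x l).

Definition RInt (f : R -> R) (a b : R) : R :=
  match excluded_middle_informative (inhabited (Riemann_integrable f a b)) with
  | left H => RiemannInt (epsilon H (fun _ => True))
  | right _ => 0
  end.

Definition xi_hyp (xi : R -> R) : Prop :=
  (forall x, 0 <= x <= 3/2 -> xi x = Rmax ((x - 1) ^ 3) 0) /\
  (forall x, 2 <= x -> xi x = 1) /\
  (forall x z, 0 <= x -> x <= z -> xi x <= xi z) /\
  (exists xi1 xi2 : R -> R,
     has_deriv_on_nonneg xi xi1 /\ has_deriv_on_nonneg xi1 xi2 /\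
     continuous_on_nonneg xi2).

Definition zeta (xi : R -> R) (x y : R) : R :=
  2 * x + (y * rpow x (y - 1) - 2 * x) * xi x.

Definition dzeta (xi : R -> R) (x y : R) : R :=
  deriv_nonneg (fun t => zeta xi t y) x.

Definition gR (xi : R -> R) (Rr x y : R) : R := sqrt (dzeta xi (Rmin x Rr) y).
Definition hR (xi : R -> R) (Rr x y : R) : R :=
  RInt (fun s => (gR xi Rr s y) ^ 2) 0 x.
Definition phiR (xi : R -> R) (Rr x y : R) : R :=
  RInt (fun s => hR xi Rr s y) 0 x.
Definition rhoR (xi : R -> R) (Rr x y : R) : R :=
  RInt (fun s => gR xi Rr s y) 0 x.
Definition iotaR (xi : R -> R) (Rr x y : R) : R :=
  x * hR xi Rr x y - 2 * phiR xi Rr x y.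

(* Submission.v *)
Require Import Defs.
From Stdlib Require Import Reals Lra ClassicalEpsilon.
From Coquelicot Require Import Coquelicot.
Open Scope R_scope.

Ltac rabs := unfold Rabs in *; repeat match goal with
  | |- context [Rcase_abs ?t] => destruct (Rcase_abs t)
  | H : context [Rcase_abs ?t] |- _ => destruct (Rcase_abs t)
  end.

Lemma dw_of_dpl F x l : derivable_pt_lim F x l -> deriv_within_nonneg_at F x l.
Proof.
  intros H eps He. destruct (H eps He) as [d Hd]. exists d. split.
  apply cond_pos. intros h Hh _ Ha. now apply Hd.
Qed.

Lemma dpl_of_dw F x l : 0 < x -> deriv_within_nonneg_at F x l -> derivable_pt_lim F x l.
Proof.
  intros Hx H eps He. destruct (H eps He) as [d [Hd Hd']].
  assert (Hm : 0 < Rmin d x) by (apply Rmin_pos; lra).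
  exists (mkposreal _ Hm). intros h Hh Ha. simpl in Ha.
  apply Hd'; auto.
  - assert (Rabs h < x) by (eapply Rlt_le_trans; [exact Ha| apply Rmin_r]). rabs; lra.
  - eapply Rlt_le_trans; [exact Ha| apply Rmin_l].
Qed.

Lemma dw_unique_right F G x l1 l2 :
  deriv_within_nonneg_at F x l1 -> deriv_within_nonneg_at G x l2 -> 0 <= x ->
  (exists d, 0 < d /\ forall h, 0 < h < d -> F (x+h) - F x = G (x+h) - G x) -> l1 = l2.
Proof.
  intros H1 H2 Hx [d [Hd Heq]].
  destruct (Req_dec l1 l2) as [E|NE]; auto. exfalso.
  set (e := Rabs (l1 - l2) / 2).
  assert (He : 0 < e) by (unfold e; assert (0 < Rabs (l1-l2)) by (apply Rabs_pos_lt; intro; apply NE; lra); lra).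
  destruct (H1 e He) as [d1 [Hd1 K1]]. destruct (H2 e He) as [d2 [Hd2 K2]].
  set (h := Rmin d (Rmin d1 d2) / 2).
  assert (Hh : 0 < h) by (unfold h; assert (0 < Rmin d (Rmin d1 d2)) by (repeat apply Rmin_pos; lra); lra).
  assert (h < d /\ h < d1 /\ h < d2) as [A [B C]].
  { unfold h. pose proof (Rmin_l d (Rmin d1 d2)). pose proof (Rmin_r d (Rmin d1 d2)).
    pose proof (Rmin_l d1 d2). pose proof (Rmin_r d1 d2). lra. }
  assert (Ha : Rabs h = h) by (rabs; lra).
  specialize (K1 h ltac:(lra) ltac:(lra) ltac:(lra)).
  specialize (K2 h ltac:(lra) ltac:(lra) ltac:(lra)).
  rewrite Heq in K1 by lra. unfold e in *.
  revert K1 K2. set (q := (G (x + h) - G x) / h). clearbody q. intros K1 K2.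
  rabs; lra.
Qed.

Lemma dw_nonneg_right F x l :
  deriv_within_nonneg_at F x l -> 0 <= x ->
  (exists d, 0 < d /\ forall h, 0 < h < d -> F x <= F (x+h)) -> 0 <= l.
Proof.
  intros H1 Hx [d [Hd Hm]].
  destruct (Rle_lt_dec 0 l) as [E|NE]; auto. exfalso.
  set (e := - l).
  destruct (H1 e ltac:(unfold e; lra)) as [d1 [Hd1 K1]].
  set (h := Rmin d d1 / 2).
  assert (Hh : 0 < h) by (unfold h; assert (0 < Rmin d d1) by (repeat apply Rmin_pos; lra); lra).
  assert (h < d /\ h < d1) as [A B].
  { unfold h. pose proof (Rmin_l d d1). pose proof (Rmin_r d d1). lra. }
  specialize (K1 h ltac:(lra) ltac:(lra) ltac:(rabs; lra)).
  specialize (Hm h ltac:(lra)).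
  assert (0 <= (F (x + h) - F x) / h) by (apply Rdiv_le_0_compat; lra).
  unfold e in *. rabs; lra.
Qed.

Lemma dw_cont F x l : 0 < x -> deriv_within_nonneg_at F x l -> continuity_pt F x.
Proof.
  intros Hx H. apply dpl_of_dw in H; auto.
  apply derivable_continuous_pt. exists l. exact H.
Qed.

Definition rp (y s : R) := exp ((y-2) * ln s).
Definition Pf (xi : R -> R) y s := (y * rp y s - 2) * xi s.
Definition dPf (xi xi1 : R -> R) y s := y*(y-2)*(rp y s / s) * xi s + (y * rp y s - 2) * xi1 s.
Definition DZf (xi xi1 : R -> R) y s := 2 + (y*(y-1)*rp y s - 2)*xi s + s*(y*rp y s - 2)*xi1 s.
Definition Jpf xi xi1 y s := s^2 * dPf xi xi1 y s.
Definition cl Rr x := Rmax 1 (Rmin x Rr).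
Definition Gt xi xi1 y Rr x := DZf xi xi1 y (cl Rr x).

Lemma loc_pos s : 0 < s -> locally s (fun t => 0 < t).
Proof. intros H. exists (mkposreal s H). intros t Ht. unfold ball in Ht; simpl in Ht. unfold AbsRing_ball, abs, minus, plus, opp in Ht; simpl in Ht.
 apply Rabs_lt_between in Ht. lra. Qed.

Lemma cl_lip Rr x z : 1 <= Rr -> Rabs (cl Rr x - cl Rr z) <= Rabs (x - z).
Proof. intros. unfold cl, Rmax, Rmin. repeat destruct Rle_dec; rabs; lra. Qed.

Lemma cl_cont Rr x : 1 <= Rr -> continuous (cl Rr) x.
Proof.
  intros HR. apply continuity_pt_filterlim. intros eps He. exists eps. split; auto.
  intros z [_ Hz]. simpl in *. unfold R_dist in *. eapply Rle_lt_trans. apply cl_lip; auto. auto.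
Qed.

Lemma cl_range Rr x : 1 <= Rr -> 1 <= cl Rr x <= Rr.
Proof. intros. unfold cl, Rmax, Rmin. repeat destruct Rle_dec; lra. Qed.

Lemma cl_id Rr x : 1 <= x <= Rr -> cl Rr x = x.
Proof. intros. unfold cl, Rmax, Rmin. repeat destruct Rle_dec; lra. Qed.

Lemma cl_low Rr x : 1 <= Rr -> x <= 1 -> cl Rr x = 1.
Proof. intros. unfold cl, Rmax, Rmin. repeat destruct Rle_dec; lra. Qed.

Lemma cl_high Rr x : 1 <= Rr -> Rr <= x -> cl Rr x = Rr.
Proof. intros. unfold cl, Rmax, Rmin. repeat destruct Rle_dec; lra. Qed.

Lemma cl_mono Rr x z : x <= z -> cl Rr x <= cl Rr z.
Proof. intros. unfold cl, Rmax, Rmin. repeat destruct Rle_dec; lra. Qed.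


Section ALL.
Variables xi xi1 xi2 : R -> R.
Hypothesis Hx1 : forall x, 0 <= x <= 3/2 -> xi x = Rmax ((x - 1) ^ 3) 0.
Hypothesis Hx2 : forall x, 2 <= x -> xi x = 1.
Hypothesis Hx3 : forall x z, 0 <= x -> x <= z -> xi x <= xi z.
Hypothesis Hd1 : has_deriv_on_nonneg xi xi1.
Hypothesis Hd2 : has_deriv_on_nonneg xi1 xi2.
Variable y : R.
Hypothesis Hy : 2 <= y <= 3.
Variable Rr : R.
Hypothesis HR : 2 < Rr.
Variable M : R.
Hypothesis HM0 : 0 <= M.
Hypothesis HM : forall c, 1 <= c <= 2 -> xi1 c <= M.

Local Notation rp := (rp y).
Local Notation P := (Pf xi y).
Local Notation dP := (dPf xi xi1 y).
Local Notation DZ := (DZf xi xi1 y).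
Local Notation Jp := (Jpf xi xi1 y).
Local Notation cl := (cl Rr).
Local Notation Gt := (Gt xi xi1 y Rr).

Lemma xi_0 x : 0 <= x <= 1 -> xi x = 0.
Proof.
  intros H. rewrite Hx1 by lra. apply Rmax_right.
  assert (0 <= 1 - x) by lra. assert (0 <= (1-x)^3) by (apply pow_le; lra).
  replace ((x-1)^3) with (-((1-x)^3)) by ring. lra.
Qed.

Lemma xi_cub x : 1 <= x <= 3/2 -> xi x = (x-1)^3.
Proof.
  intros H. rewrite Hx1 by lra. apply Rmax_left. apply pow_le. lra.
Qed.

Lemma xi_nn x : 0 <= x -> 0 <= xi x.
Proof. intros H. rewrite <- (xi_0 0) by lra. apply Hx3; lra. Qed.

Lemma xi_le1 x : 0 <= x -> xi x <= 1.
Proof.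
  intros H. destruct (Rle_dec 2 x). rewrite Hx2; lra.
  rewrite <- (Hx2 2) by lra. apply Hx3; lra.
Qed.

Lemma xi_ge18 x : 3/2 <= x -> 1/8 <= xi x.
Proof.
  intros H. replace (1/8) with (xi (3/2)). apply Hx3; lra.
  rewrite xi_cub by lra. field.
Qed.

Lemma dpl_const c x : derivable_pt_lim (fun _ => c) x 0.
Proof. apply is_derive_Reals. auto_derive; auto. Qed.

Lemma xi1_0a x : 0 <= x < 1 -> xi1 x = 0.
Proof.
  intros H. apply (dw_unique_right xi (fun _ => 0) x); [apply Hd1; lra| |lra|].
  apply dw_of_dpl, dpl_const.
  exists (1 - x). split; [lra|]. intros h Hh. rewrite !xi_0 by lra. ring.
Qed.

Lemma xi1_cub x : 1 <= x < 3/2 -> xi1 x = 3 * (x-1)^2.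
Proof.
  intros H. apply (dw_unique_right xi (fun t => (t-1)^3) x); [apply Hd1; lra| |lra|].
  apply dw_of_dpl, is_derive_Reals. auto_derive; auto. ring.
  exists (3/2 - x). split; [lra|]. intros h Hh. rewrite !xi_cub by lra. ring.
Qed.

Lemma xi1_01 x : 0 <= x <= 1 -> xi1 x = 0.
Proof.
  intros H. destruct (Req_dec x 1). subst. rewrite xi1_cub by lra. ring.
  apply xi1_0a. lra.
Qed.

Lemma xi1_2 x : 2 <= x -> xi1 x = 0.
Proof.
  intros H. apply (dw_unique_right xi (fun _ => 0) x); [apply Hd1; lra| |lra|].
  apply dw_of_dpl, dpl_const.
  exists 1. split; [lra|]. intros h Hh. rewrite !Hx2 by lra. ring.
Qed.

Lemma xi1_nn x : 0 <= x -> 0 <= xi1 x.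
Proof.
  intros H. apply (dw_nonneg_right xi x); [apply Hd1; lra|lra|].
  exists 1. split; [lra|]. intros h Hh. apply Hx3; lra.
Qed.

Lemma xi_dpl x : 0 < x -> derivable_pt_lim xi x (xi1 x).
Proof. intros H. apply dpl_of_dw; auto. apply Hd1. lra. Qed.

Lemma xi_cont x : 0 < x -> continuous xi x.
Proof. intros H. apply continuity_pt_filterlim. eapply dw_cont; eauto. apply Hd1; lra. Qed.

Lemma xi1_cont x : 0 < x -> continuous xi1 x.
Proof. intros H. apply continuity_pt_filterlim. eapply dw_cont; eauto. apply Hd2; lra. Qed.

Lemma xi1_bound : exists M, 0 <= M /\ forall c, 1 <= c <= 2 -> xi1 c <= M.
Proof.
  destruct (continuity_ab_maj xi1 1 2) as [m [Hm1 Hm2]]. lra.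
  intros c Hc. apply continuity_pt_filterlim. apply xi1_cont. lra.
  exists (xi1 m). split; auto. apply xi1_nn. lra.
Qed.


Lemma rp_eq s : 0 < s -> rp s = Rpower s (y-2).
Proof. intros; reflexivity. Qed.

Lemma rp_pos s : 0 < rp s.
Proof. apply exp_pos. Qed.


Lemma ln_le' x z : 0 < x -> x <= z -> ln x <= ln z.
Proof. intros. destruct (Req_dec x z). subst; lra. left; apply ln_increasing; lra. Qed.

Lemma exp_le' x z : x <= z -> exp x <= exp z.
Proof. intros. destruct (Req_dec x z). subst; lra. left; apply exp_increasing; lra. Qed.

Lemma ln_nn s : 1 <= s -> 0 <= ln s.
Proof. intros. rewrite <- ln_1. apply ln_le'; lra. Qed.

Lemma rp_ge1 s : 1 <= s -> 1 <= rp s.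
Proof.
  intros H. unfold rp. rewrite <- exp_0. apply exp_le'.
  pose proof (ln_nn s H). nra.
Qed.

Lemma rp_mono s t : 0 < s -> s <= t -> rp s <= rp t.
Proof.
  intros. unfold rp. apply exp_le'. pose proof (ln_le' s t H H0). nra.
Qed.

Lemma ln2_pos : 0 < ln 2.
Proof. pose proof ln_lt_2. lra. Qed.

Lemma rp_le2 s : 0 < s <= 2 -> rp s <= 2.
Proof.
  intros H. unfold rp. apply Rle_trans with (exp (ln 2)); [|rewrite exp_ln; lra]. apply exp_le'.
  pose proof (ln_le' s 2 ltac:(lra) ltac:(lra)). pose proof ln2_pos.
  destruct (Rle_dec 0 (ln s)); nra.
Qed.

Lemma rp_mul s t : 0 < s -> 0 < t -> rp (s * t) = rp s * rp t.
Proof. intros. unfold rp. rewrite ln_mult by auto. rewrite <- exp_plus. f_equal. ring. Qed.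

Lemma rp_half s : 0 < s -> rp s <= 2 * rp (s/2).
Proof.
  intros. replace s with (2 * (s/2)) at 1 by field. rewrite rp_mul by lra.
  pose proof (rp_le2 2 ltac:(lra)). pose proof (rp_pos (s/2)). nra.
Qed.

Lemma rp_m1 s : 1 <= s <= 2 -> rp s - 1 <= 2 * (y - 2).
Proof.
  intros H. set (v := (y-2) * ln s).
  assert (Hl : ln s <= 1). { pose proof (exp_ineq1_le (ln s)). rewrite exp_ln in H0 by lra. lra. }
  pose proof (ln_nn s ltac:(lra)).
  assert (Hv : 0 <= v <= y - 2) by (unfold v; split; nra).
  assert (E : rp s = exp v) by reflexivity.
  pose proof (rp_le2 s ltac:(lra)).
  pose proof (exp_ineq1_le (-v)).
  assert (exp v * exp (-v) = 1) by (rewrite <- exp_plus; replace (v + -v) with 0 by ring; apply exp_0).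
  pose proof (exp_pos v). pose proof (exp_pos (-v)). rewrite E in *. nra.
Qed.

Lemma ysub1 s : 1 <= s -> (y-2) * rp s <= y * rp s - 2.
Proof. intros. pose proof (rp_ge1 s H). nra. Qed.

Lemma ysub2 s : 1 <= s <= 2 -> y * rp s - 2 <= 6 * (y - 2).
Proof. intros. pose proof (rp_m1 s H). pose proof (rp_le2 s ltac:(lra)). nra. Qed.


Lemma DZ_01 s : 0 <= s <= 1 -> DZ s = 2.
Proof. intros. unfold DZf. rewrite xi_0, xi1_01 by lra. ring. Qed.
Lemma P_01 s : 0 <= s <= 1 -> P s = 0.
Proof. intros. unfold Pf. rewrite xi_0 by lra. ring. Qed.
Lemma dP_01 s : 0 <= s <= 1 -> dP s = 0.
Proof. intros. unfold dPf. rewrite xi_0, xi1_01 by lra. ring. Qed.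
Lemma Jp_01 s : 0 <= s <= 1 -> Jp s = 0.
Proof. intros. unfold Jpf. rewrite dP_01 by lra. ring. Qed.

Lemma DZ_eq s : 0 < s -> DZ s = 2 + P s + s * dP s.
Proof. intros. unfold DZf, Pf, dPf. field. lra. Qed.

Lemma DZ_ge2 s : 0 <= s -> 2 <= DZ s.
Proof.
  intros H. destruct (Rle_dec s 1). rewrite DZ_01; lra.
  unfold DZf. pose proof (rp_ge1 s ltac:(lra)). pose proof (xi_nn s H). pose proof (xi1_nn s H).
  pose proof (ysub1 s ltac:(lra)).
  assert (2 <= y*(y-1)) by nra. assert (0 <= (y*(y-1)*rp s - 2)) by nra.
  assert (0 <= (y-2) * rp s) by (apply Rmult_le_pos; lra). assert (0 <= s * (y * rp s - 2)) by (apply Rmult_le_pos; lra).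
  assert (0 <= (y*(y-1)*rp s - 2) * xi s) by (apply Rmult_le_pos; lra). assert (0 <= s * (y * rp s - 2) * xi1 s) by (apply Rmult_le_pos; lra). lra.
Qed.

Lemma DZ_ge2rp s : 2 <= s -> 2 * rp s <= DZ s.
Proof.
  intros H. unfold DZf. rewrite Hx2 by lra. rewrite xi1_2 by lra.
  pose proof (rp_ge1 s ltac:(lra)). assert (2 <= y*(y-1)) by nra.
  assert (0 <= (y*(y-1)-2) * rp s) by (apply Rmult_le_pos; lra). lra.
Qed.

Lemma DZ_gerp s : 0 < s -> 1 <= s -> rp s <= DZ s.
Proof.
  intros H H1. destruct (Rle_dec s 2).
  - pose proof (rp_le2 s ltac:(lra)). pose proof (DZ_ge2 s ltac:(lra)). lra.
  - pose proof (DZ_ge2rp s ltac:(lra)). pose proof (rp_pos s). lra.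
Qed.

Lemma P_lb s : 1 <= s -> (y-2) * rp s * xi s <= P s.
Proof. intros. unfold Pf. pose proof (ysub1 s H). pose proof (xi_nn s ltac:(lra)). nra. Qed.

Lemma P_nn s : 1 <= s -> 0 <= P s.
Proof. intros. pose proof (P_lb s H). pose proof (rp_pos s). pose proof (xi_nn s ltac:(lra)).
  assert (0 <= (y-2) * rp s) by nra. nra. Qed.

Lemma dP_nn s : 1 <= s -> 0 <= dP s.
Proof.
  intros. unfold dPf. pose proof (ysub1 s H). pose proof (xi_nn s ltac:(lra)).
  pose proof (xi1_nn s ltac:(lra)). pose proof (rp_pos s).
  assert (0 <= rp s / s) by (apply Rdiv_le_0_compat; lra).
  assert (0 <= y * (y-2) * (rp s / s)) by (apply Rmult_le_pos; nra).
  assert (0 <= y * rp s - 2) by nra. nra.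
Qed.

Lemma Derive_xi s : 0 < s -> Derive xi s = xi1 s.
Proof. intros. apply is_derive_unique. apply is_derive_Reals. apply xi_dpl; auto. Qed.
Lemma ex_derive_xi s : 0 < s -> ex_derive xi s.
Proof. intros. exists (xi1 s). apply is_derive_Reals. apply xi_dpl; auto. Qed.

Lemma P_der s : 0 < s -> is_derive P s (dP s).
Proof.
  intros H. unfold Pf, dPf, rp. auto_derive.
  - split; auto. split; auto. apply ex_derive_xi; auto.
  - rewrite Derive_xi by auto. field. lra.
Qed.

Lemma Z2_der s : 0 < s -> is_derive (fun t => t * (2 + P t)) s (DZ s).
Proof.
  intros H. unfold DZf, Pf, rp. auto_derive.
  - split; auto. split; auto. apply ex_derive_xi; auto.
  - rewrite Derive_xi by auto. field. lra.
Qed.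

Lemma zeta_eq t : 0 < t -> zeta xi t y = t * (2 + P t).
Proof.
  intros H. unfold zeta, rpow, Pf, rp. destruct (Rlt_dec 0 t); [|lra].
  unfold Rpower. replace ((y-1) * ln t) with (ln t + (y-2) * ln t) by ring.
  rewrite exp_plus, exp_ln by auto. ring.
Qed.

Lemma zeta_der s : 0 < s -> is_derive (fun t => zeta xi t y) s (DZ s).
Proof.
  intros H. eapply is_derive_ext_loc; [|apply Z2_der; auto].
  eapply filter_imp; [|apply loc_pos; exact H]. intros t Ht. simpl. rewrite zeta_eq; auto.
Qed.

Lemma zeta_dw s : 0 <= s -> deriv_within_nonneg_at (fun t => zeta xi t y) s (DZ s).
Proof.
  intros H. destruct (Rlt_dec 0 s).
  - apply dw_of_dpl. apply is_derive_Reals. apply zeta_der; auto.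
  - assert (s = 0) by lra. subst. rewrite DZ_01 by lra.
    intros eps He. exists 1. split; [lra|]. intros h Hh H0 Ha.
    assert (0 < h < 1) by (rabs; lra).
    unfold zeta. rewrite !Rplus_0_l, xi_0, (xi_0 0) by lra.
    replace ((2 * h + (y * rpow h (y - 1) - 2 * h) * 0 - (2 * 0 + (y * rpow 0 (y - 1) - 2 * 0) * 0)) / h - 2) with 0 by (field; lra).
    rabs; lra.
Qed.

Lemma dzeta_eq s : 0 <= s -> dzeta xi s y = DZ s.
Proof.
  intros H. unfold dzeta, deriv_nonneg.
  assert (Ex : exists l, deriv_within_nonneg_at (fun t => zeta xi t y) s l) by (exists (DZ s); apply zeta_dw; auto).
  pose proof (epsilon_spec (inhabits 0) _ Ex) as Hs.
  eapply dw_unique_right; [exact Hs| apply zeta_dw; auto| auto|].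
  exists 1. split; [lra|]. intros; reflexivity.
Qed.

Lemma DZ_cont s : 0 < s -> continuous DZ s.
Proof.
  intros H. apply (@ex_derive_continuous R_AbsRing R_NormedModule). unfold DZf, rp. auto_derive.
  repeat split; auto. apply ex_derive_xi; auto. exists (xi2 s). apply is_derive_Reals. apply dpl_of_dw; auto. apply Hd2; lra.
Qed.

Lemma Gt_cont x : continuous Gt x.
Proof.
  unfold Gt. apply (continuous_comp cl DZ). apply cl_cont; lra.
  apply DZ_cont. pose proof (cl_range Rr x ltac:(lra)). lra.
Qed.

Lemma ex_RInt_cont (f : R -> R) a b : (forall t, continuous f t) -> ex_RInt f a b.
Proof. intros Hf. apply (@ex_RInt_continuous R_CompleteNormedModule). intros; apply Hf. Qed.

Lemma is_derive_RInt0 (f : R -> R) x : (forall t, continuous f t) -> is_derive (fun z => RInt f 0 z) x (f x).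
Proof.
  intros Hf. apply (is_derive_RInt f (fun z => RInt f 0 z) 0 x).
  apply filter_forall. intros b. apply (@RInt_correct R_CompleteNormedModule). apply ex_RInt_cont; auto.
  apply Hf.
Qed.

Lemma bridge (f g : R -> R) a b : (forall t, Rmin a b < t < Rmax a b -> f t = g t) ->
  (forall t, continuous g t) -> Defs.RInt f a b = RInt g a b.
Proof.
  intros E Hg. assert (Eg : ex_RInt g a b) by (apply ex_RInt_cont; auto).
  assert (Ef : ex_RInt f a b). { eapply (@ex_RInt_ext R_CompleteNormedModule); [|exact Eg]. intros; symmetry; auto. }
  pose proof (ex_RInt_Reals_0 f a b Ef) as Ri.
  unfold Defs.RInt. destruct (excluded_middle_informative (inhabited (Riemann_integrable f a b))) as [I|I].
  - rewrite <- RInt_Reals. apply (@RInt_ext R_CompleteNormedModule). auto.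
  - exfalso. apply I. constructor. exact Ri.
Qed.

Definition H0 x := RInt Gt 0 x.
Definition Phi x := RInt H0 0 x.
Definition iota x := x * H0 x - 2 * Phi x.
Definition Jc x := x * Gt x - H0 x.

Lemma Gt_ge2 x : 2 <= Gt x.
Proof. unfold Gt. apply DZ_ge2. pose proof (cl_range Rr x ltac:(lra)). lra. Qed.

Lemma H_der x : is_derive H0 x (Gt x).
Proof. apply is_derive_RInt0. apply Gt_cont. Qed.

Lemma H_cont x : continuous H0 x.
Proof. apply (@ex_derive_continuous R_AbsRing R_NormedModule). exists (Gt x). apply H_der. Qed.

Lemma Phi_der x : is_derive Phi x (H0 x).
Proof. apply is_derive_RInt0. apply H_cont. Qed.

Lemma scalR a b : scal a b = a * b.
Proof. reflexivity. Qed.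

Lemma Gt_low x : x <= 1 -> Gt x = 2.
Proof. intros. unfold Gt. rewrite cl_low by lra. apply DZ_01. lra. Qed.

Lemma H_low x : 0 <= x <= 1 -> H0 x = 2 * x.
Proof.
  intros Hx. unfold H0. rewrite ((@RInt_ext R_CompleteNormedModule) Gt (fun _ => 2)).
  rewrite (@RInt_const R_CompleteNormedModule). unfold scal; simpl; unfold mult; simpl. ring.
  intros t Ht. rewrite Rmin_left, Rmax_right in Ht by lra. apply Gt_low. lra.
Qed.

Lemma H_mid x : 1 <= x <= Rr -> H0 x = x * (2 + P x).
Proof.
  intros Hx. unfold H0.
  rewrite <- ((@RInt_Chasles R_CompleteNormedModule) Gt 0 1 x) by (apply ex_RInt_cont, Gt_cont).
  fold (H0 1). rewrite H_low by lra.
  rewrite ((@RInt_ext R_CompleteNormedModule) Gt DZ).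
  rewrite ((@is_RInt_unique R_CompleteNormedModule) DZ 1 x (minus (x * (2 + P x)) (1 * (2 + P 1)))).
  rewrite (P_01 1) by lra. unfold minus, plus, opp; simpl. ring.
  apply ((@is_RInt_derive R_CompleteNormedModule) (fun t => t * (2 + P t)) DZ).
  intros t Ht. rewrite Rmin_left, Rmax_right in Ht by lra. apply Z2_der. lra.
  intros t Ht. rewrite Rmin_left, Rmax_right in Ht by lra. apply DZ_cont. lra.
  intros t Ht. rewrite Rmin_left, Rmax_right in Ht by lra. unfold Gt. rewrite cl_id by lra. auto.
Qed.

Lemma H_high x : Rr <= x -> H0 x = H0 Rr + (x - Rr) * DZ Rr.
Proof.
  intros Hx. unfold H0.
  rewrite <- ((@RInt_Chasles R_CompleteNormedModule) Gt 0 Rr x) by (apply ex_RInt_cont, Gt_cont).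
  rewrite ((@RInt_ext R_CompleteNormedModule) Gt (fun _ => DZ Rr) Rr x).
  rewrite (@RInt_const R_CompleteNormedModule). reflexivity.
  intros t Ht. rewrite Rmin_left, Rmax_right in Ht by lra. unfold Gt. rewrite cl_high by lra. auto.
Qed.

Lemma Jc_eq x : 0 <= x -> Jc x = Jp (cl x).
Proof.
  intros Hx. unfold Jc. destruct (Rle_dec x 1).
  - rewrite Gt_low, H_low by lra. rewrite cl_low by lra. rewrite Jp_01 by lra. ring.
  - destruct (Rle_dec x Rr).
    + unfold Gt. rewrite cl_id by lra. rewrite H_mid by lra.
      unfold Jpf. rewrite DZ_eq by lra. ring.
    + unfold Gt. rewrite cl_high by lra. rewrite H_high by lra. rewrite H_mid by lra.
      unfold Jpf. rewrite DZ_eq by lra. ring.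
Qed.

Lemma Jc_cont x : continuous Jc x.
Proof.
  unfold Jc. apply (continuous_minus (fun t => t * Gt t) H0).
  apply (continuous_mult (fun t => t) Gt). apply continuous_id. apply Gt_cont.
  apply H_cont.
Qed.

Lemma iota_der x : is_derive iota x (Jc x).
Proof.
  unfold iota, Jc. auto_derive.
  - split. exists (Gt x). apply H_der. split; auto. exists (H0 x). apply Phi_der.
  - rewrite (is_derive_unique (fun t : R => H0 t) x (Gt x)) by apply H_der.
    rewrite (is_derive_unique (fun t : R => Phi t) x (H0 x)) by apply Phi_der. ring.
Qed.

Lemma iota_int x : iota x = RInt Jc 0 x.
Proof.
  symmetry. rewrite ((@is_RInt_unique R_CompleteNormedModule) Jc 0 x (minus (iota x) (iota 0))).
  unfold iota at 2, Phi. rewrite (@RInt_point R_CompleteNormedModule). unfold minus, plus, opp, zero; simpl. ring.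
  apply (@is_RInt_derive R_CompleteNormedModule). intros; apply iota_der. intros; apply Jc_cont.
Qed.

Lemma sqrtGt_cont x : continuous (fun s => sqrt (Gt s)) x.
Proof. apply (continuous_comp Gt sqrt). apply Gt_cont. apply continuous_sqrt. Qed.

Lemma gR_eq x : 0 <= x -> gR xi Rr x y = sqrt (Gt x).
Proof.
  intros Hx. unfold gR. rewrite dzeta_eq by (apply Rmin_glb; lra). f_equal.
  unfold Gt, Submission.cl. destruct (Rle_dec 1 (Rmin x Rr)).
  - rewrite Rmax_right; auto.
  - rewrite Rmax_left by lra. rewrite !DZ_01; try lra. split; [apply Rmin_glb|]; lra.
Qed.

Lemma hR_eq x : 0 <= x -> hR xi Rr x y = H0 x.
Proof.
  intros Hx. unfold hR, H0. apply bridge; [|apply Gt_cont].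
  intros t Ht. rewrite Rmin_left in Ht by lra. rewrite gR_eq by lra.
  simpl. rewrite Rmult_1_r. apply sqrt_sqrt. pose proof (Gt_ge2 t). lra.
Qed.

Lemma phiR_eq x : 0 <= x -> phiR xi Rr x y = Phi x.
Proof.
  intros Hx. unfold phiR, Phi. apply bridge; [|apply H_cont].
  intros t Ht. rewrite Rmin_left in Ht by lra. apply hR_eq. lra.
Qed.

Lemma rhoR_eq x : 0 <= x -> rhoR xi Rr x y = RInt (fun s => sqrt (Gt s)) 0 x.
Proof.
  intros Hx. unfold rhoR. apply bridge; [|apply sqrtGt_cont].
  intros t Ht. rewrite Rmin_left in Ht by lra. apply gR_eq. lra.
Qed.

Lemma iotaR_eq x : 0 <= x -> iotaR xi Rr x y = iota x.
Proof. intros. unfold iotaR, iota. rewrite hR_eq, phiR_eq; auto. Qed.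

Lemma Jp_form u : 0 < u -> Jp u = u*y*(y-2)*rp u * xi u + u^2*(y*rp u - 2)*xi1 u.
Proof. intros. unfold Jpf, dPf. field. lra. Qed.

Lemma Jp_big u : 2 <= u -> Jp u = u*y*(y-2)*rp u.
Proof. intros. rewrite Jp_form by lra. rewrite Hx2, xi1_2 by lra. ring. Qed.

Lemma Jp_nn u : 1 <= u -> 0 <= Jp u.
Proof. intros. unfold Jpf. pose proof (dP_nn u H). apply Rmult_le_pos; auto. apply pow2_ge_0. Qed.

Lemma ya_nn : 0 <= y - 2.
Proof. lra. Qed.

Lemma Jp_ub u : 1 <= u -> Jp u <= (y-2)*(3+12*M) * u * rp u.
Proof.
  intros Hu. rewrite Jp_form by lra.
  pose proof (rp_ge1 u Hu). pose proof (xi_nn u ltac:(lra)). pose proof (xi_le1 u ltac:(lra)).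
  pose proof (xi1_nn u ltac:(lra)).
  assert (A1 : u*y*(y-2)*rp u * xi u <= (y-2)*3*u*rp u).
  { assert (0 <= u*(y-2)*rp u) by (repeat apply Rmult_le_pos; lra).
    assert (u*y*(y-2)*rp u * xi u = (u*(y-2)*rp u) * (y * xi u)) by ring.
    assert (y * xi u <= 3) by nra. nra. }
  assert (A2 : u^2*(y*rp u - 2)*xi1 u <= (y-2)*12*M*u*rp u).
  { destruct (Rle_dec u 2).
    - pose proof (ysub2 u ltac:(lra)). pose proof (ysub1 u ltac:(lra)). pose proof (HM u ltac:(lra)).
      assert (0 <= (y-2)*rp u) by (apply Rmult_le_pos; lra).
      assert (0 <= y * rp u - 2) by lra.
      assert ((y*rp u - 2)*xi1 u <= 6*(y-2)*M) by (apply Rmult_le_compat; lra).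
      assert (u^2 <= 2*u) by nra.
      assert (u^2*(y*rp u - 2)*xi1 u <= 2*u*(6*(y-2)*M)).
      { replace (u^2*(y*rp u - 2)*xi1 u) with (u^2*((y*rp u - 2)*xi1 u)) by ring.
        apply Rmult_le_compat; try nra. }
      assert (0 <= (y-2)*M*u) by (repeat apply Rmult_le_pos; lra).
      nra.
    - rewrite xi1_2 by lra. assert (0 <= (y-2)*M*u*rp u) by (repeat apply Rmult_le_pos; lra). nra. }
  lra.
Qed.

Definition Cxi := 8*M^2+5.
Definition c4 := 288 + 96*Cxi.

Lemma xi1_sq u : 1 <= u <= 2 -> xi1 u ^2 <= Cxi * xi u.
Proof.
  intros Hu. unfold Cxi. destruct (Rlt_dec u (3/2)).
  - rewrite xi1_cub, xi_cub by lra. set (t := u - 1). assert (0 <= t <= 1/2) by (unfold t; lra).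
    assert (0 <= M^2) by nra. assert (0 <= t^3) by (apply pow_le; lra).
    assert (9*t^4 <= 5 * t^3) by nra. nra.
  - pose proof (xi_ge18 u ltac:(lra)). pose proof (HM u Hu). pose proof (xi1_nn u ltac:(lra)).
    assert (xi1 u ^2 <= M^2) by nra. nra.
Qed.

Lemma Cxi_nn : 0 <= Cxi.
Proof. unfold Cxi. nra. Qed.

Lemma Jp_sq u : 1 <= u <= 4 -> Jp u ^ 2 <= c4 * (y-2) * DZ u * P u.
Proof.
  intros Hu. rewrite Jp_form by lra.
  set (A1 := u*y*(y-2)*rp u * xi u). set (A2 := u^2*(y*rp u - 2)*xi1 u).
  pose proof (rp_ge1 u ltac:(lra)). pose proof (xi_nn u ltac:(lra)). pose proof (xi_le1 u ltac:(lra)).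
  pose proof (xi1_nn u ltac:(lra)). pose proof (DZ_gerp u ltac:(lra) ltac:(lra)). pose proof (P_lb u ltac:(lra)).
  pose proof (DZ_ge2 u ltac:(lra)). pose proof (P_nn u ltac:(lra)).
  assert (Hsq : (A1 + A2)^2 <= 2*A1^2 + 2*A2^2) by (pose proof (pow2_ge_0 (A1 - A2)); replace ((A1+A2)^2) with (2*A1^2 + 2*A2^2 - (A1-A2)^2) by ring; lra).
  assert (B : (y-2)^2 * rp u ^2 * xi u <= (y-2) * DZ u * P u).
  { assert (0 <= (y-2) * rp u) by (apply Rmult_le_pos; lra).
    assert ((y-2)*rp u * ((y-2) * rp u * xi u) <= (y-2)*rp u * P u) by (apply Rmult_le_compat_l; lra).
    assert ((y-2) * rp u * P u <= (y-2) * DZ u * P u).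
    { apply Rmult_le_compat_r; auto. apply Rmult_le_compat_l; lra. }
    nra. }
  assert (HA1 : A1^2 <= 144 * ((y-2) * DZ u * P u)).
  { unfold A1. assert (xi u ^2 <= xi u) by nra.
    assert (A1e : (u*y*(y-2)*rp u * xi u)^2 = (u*y)^2 * ((y-2)^2*rp u^2 * xi u^2)) by ring.
    rewrite A1e.
    assert ((u*y)^2 <= 144) by (assert (0 <= u*y <= 12) by nra; nra).
    assert (0 <= (y-2)^2*rp u^2 * xi u^2) by (repeat apply Rmult_le_pos; try apply pow2_ge_0; lra).
    assert ((y-2)^2*rp u^2 * xi u^2 <= (y-2)^2*rp u^2 * xi u) by (apply Rmult_le_compat_l; [apply Rmult_le_pos; apply pow2_ge_0| lra]).
    assert ((u*y)^2 * ((y-2)^2*rp u^2 * xi u^2) <= 144 * ((y-2)^2*rp u^2 * xi u^2)) by (apply Rmult_le_compat_r; lra).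
    nra. }
  assert (HA2 : A2^2 <= 48 * Cxi * ((y-2) * DZ u * P u)).
  { destruct (Rle_dec u 2).
    - unfold A2. pose proof (xi1_sq u ltac:(lra)). pose proof (ysub2 u ltac:(lra)). pose proof (ysub1 u ltac:(lra)).
      pose proof Cxi_nn.
      assert (0 <= (y-2)*rp u) by (apply Rmult_le_pos; lra).
      assert (Hq : 0 <= y*rp u - 2) by lra.
      assert (A2e : (u^2*(y*rp u - 2)*xi1 u)^2 = u^4 * (y*rp u - 2) * ((y*rp u - 2) * xi1 u^2)) by ring.
      rewrite A2e.
      assert (E1 : (y*rp u - 2) * xi1 u^2 <= 6*(y-2)*(Cxi * xi u)) by (apply Rmult_le_compat; try lra; apply pow2_ge_0).
      assert (u^4 <= 16) by (assert (u^2 <= 4) by nra; nra).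
      assert (0 <= u^4) by (apply pow_le; lra).
      assert (E2 : u^4 * (y*rp u - 2) * ((y*rp u - 2) * xi1 u^2) <= 16 * (y*rp u - 2) * (6*(y-2)*(Cxi * xi u))).
      { apply Rmult_le_compat; try (apply Rmult_le_pos; lra). apply Rmult_le_pos; [lra|apply pow2_ge_0]. nra. auto. }
      assert (E3 : 16 * (y*rp u - 2) * (6*(y-2)*(Cxi * xi u)) = 96 * Cxi * (y-2) * P u) by (unfold Pf; ring).
      assert (E4 : 0 <= Cxi * (y-2) * P u) by (apply Rmult_le_pos; [apply Rmult_le_pos|]; lra).
      assert (Cxi * (y-2) * P u * 2 <= Cxi * (y-2) * P u * DZ u) by (apply Rmult_le_compat_l; lra).
      nra.
    - unfold A2. rewrite xi1_2 by lra. pose proof Cxi_nn.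
      assert (0 <= (y-2) * DZ u) by (apply Rmult_le_pos; lra).
      assert (0 <= (y-2) * DZ u * P u) by (apply Rmult_le_pos; lra).
      assert (0 <= Cxi * ((y-2) * DZ u * P u)) by (apply Rmult_le_pos; lra).
      replace ((u ^ 2 * (y * rp u - 2) * 0) ^ 2) with 0 by ring. lra. }
  unfold c4. nra.
Qed.

Lemma Jp_near1 u : 1 <= u <= 5/4 -> Jp u <= 50*(u-1)^2.
Proof.
  intros Hu. rewrite Jp_form by lra. rewrite xi_cub, xi1_cub by lra.
  pose proof (rp_ge1 u ltac:(lra)). pose proof (rp_le2 u ltac:(lra)).
  pose proof (ysub2 u ltac:(lra)). pose proof (ysub1 u ltac:(lra)).
  set (t := u - 1). assert (0 <= t <= 1/4) by (unfold t; lra).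
  assert (0 <= (y-2)*rp u) by (apply Rmult_le_pos; lra).
  assert ((y-2)*rp u <= 2) by nra. assert (0 <= u*y <= 4) by nra.
  assert (0 <= u*y*(y-2)*rp u <= 12).
  { replace (u*y*(y-2)*rp u) with ((u*y)*((y-2)*rp u)) by ring. split. apply Rmult_le_pos; lra. nra. }
  assert (0 <= t^3 <= t^2/4) by (split; [apply pow_le; lra| nra]).
  assert (0 <= y*rp u - 2 <= 6) by lra.
  assert (0 <= u^2 <= 2) by nra.
  assert (0 <= u^2*(y*rp u - 2) <= 12) by (split; [apply Rmult_le_pos; lra| nra]).
  assert (0 <= t^2) by apply pow2_ge_0.
  nra.
Qed.

Lemma P_near1 u : 1 <= u <= 3/2 -> (y-2)*(u-1)^3 <= P u.
Proof.
  intros Hu. pose proof (P_lb u ltac:(lra)). rewrite xi_cub in H by lra.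
  pose proof (rp_ge1 u ltac:(lra)). assert (0 <= (u-1)^3) by (apply pow_le; lra).
  assert (0 <= (y-2)*(u-1)^3) by (apply Rmult_le_pos; lra). nra.
Qed.

Definition rho x := RInt (fun s => sqrt (Gt s)) 0 x.

Lemma Jc_nn t : 0 <= t -> 0 <= Jc t.
Proof. intros. rewrite Jc_eq by auto. apply Jp_nn. pose proof (cl_range Rr t ltac:(lra)). lra. Qed.

Lemma ex_Jc a b : ex_RInt Jc a b.
Proof. apply ex_RInt_cont. apply Jc_cont. Qed.

Lemma iota_diff u v : iota v - iota u = RInt Jc u v.
Proof.
  rewrite !iota_int. rewrite <- ((@RInt_Chasles R_CompleteNormedModule) Jc 0 u v) by apply ex_Jc.
  unfold plus; simpl. ring.
Qed.

Lemma iota_mono u v : 0 <= u <= v -> iota u <= iota v.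
Proof.
  intros H. pose proof (iota_diff u v). assert (0 <= RInt Jc u v).
  { apply RInt_ge_0. lra. apply ex_Jc. intros; apply Jc_nn; lra. }
  lra.
Qed.

Lemma int_lb_const (f : R -> R) a b c : a <= b -> ex_RInt f a b -> (forall t, a < t < b -> c <= f t) -> (b - a) * c <= RInt f a b.
Proof.
  intros Hab Ef Hc. replace ((b-a)*c) with (RInt (fun _ => c) a b).
  apply RInt_le; auto. apply ex_RInt_const.
  rewrite (@RInt_const R_CompleteNormedModule). reflexivity.
Qed.

Lemma int_ub_const (f : R -> R) a b c : a <= b -> ex_RInt f a b -> (forall t, a < t < b -> f t <= c) -> RInt f a b <= (b - a) * c.
Proof.
  intros Hab Ef Hc. replace ((b-a)*c) with (RInt (fun _ => c) a b).
  apply RInt_le; auto. apply ex_RInt_const.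
  rewrite (@RInt_const R_CompleteNormedModule). reflexivity.
Qed.

Lemma iota_01 x : 0 <= x <= 1 -> iota x = 0.
Proof.
  intros Hx. rewrite iota_int. rewrite ((@RInt_ext R_CompleteNormedModule) Jc (fun _ => 0)).
  rewrite (@RInt_const R_CompleteNormedModule). unfold scal; simpl; unfold mult; simpl. ring.
  intros t Ht. rewrite Rmin_left, Rmax_right in Ht by lra. rewrite Jc_eq by lra. rewrite cl_low by lra. apply Jp_01. lra.
Qed.

Lemma iota_nn x : 0 <= x -> 0 <= iota x.
Proof. intros. rewrite <- (iota_01 0) by lra. apply iota_mono. lra. Qed.

Lemma dP_cont t : 0 < t -> continuous dP t.
Proof.
  intros H. apply (@ex_derive_continuous R_AbsRing R_NormedModule). unfold dPf, rp. auto_derive.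
  repeat split; auto; try lra. apply ex_derive_xi; auto. exists (xi2 t). apply is_derive_Reals. apply dpl_of_dw; auto. apply Hd2; lra.
Qed.

Lemma ex_dP u : 1 <= u -> ex_RInt dP 1 u.
Proof.
  intros. apply (@ex_RInt_continuous R_CompleteNormedModule). intros z Hz.
  rewrite Rmin_left, Rmax_right in Hz by lra. apply dP_cont. lra.
Qed.

Lemma RInt_dP u : 1 <= u -> RInt dP 1 u = P u.
Proof.
  intros Hu. rewrite ((@is_RInt_unique R_CompleteNormedModule) dP 1 u (minus (P u) (P 1))).
  rewrite (P_01 1) by lra. unfold minus, plus, opp; simpl. ring.
  apply (@is_RInt_derive R_CompleteNormedModule).
  intros t Ht. rewrite Rmin_left, Rmax_right in Ht by lra. apply P_der. lra.
  intros t Ht. rewrite Rmin_left, Rmax_right in Ht by lra. apply dP_cont. lra.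
Qed.

Lemma cl_le x : 1 <= x -> cl x <= x.
Proof. intros. unfold Submission.cl, Rmax, Rmin. repeat destruct Rle_dec; lra. Qed.

Lemma iota_geP x : 1 <= x -> P (cl x) <= iota x.
Proof.
  intros Hx. set (u := cl x). pose proof (cl_range Rr x ltac:(lra)). fold u in H.
  assert (u <= x) by (apply cl_le; auto).
  assert (iota u <= iota x) by (apply iota_mono; lra).
  pose proof (iota_diff 1 u) as D1. rewrite (iota_01 1) in D1 by lra.
  assert (D2 : RInt dP 1 u <= RInt Jc 1 u).
  { apply RInt_le. lra. apply ex_dP; lra. apply ex_Jc.
    intros t Ht. rewrite Jc_eq by lra. rewrite cl_id by lra. unfold Jpf.
    pose proof (dP_nn t ltac:(lra)). assert (1 <= t^2) by nra. nra. }
  rewrite RInt_dP in D2 by lra. lra.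
Qed.

Lemma iota_gebig x : 4 <= cl x -> (y-2) * cl x ^2 * rp (cl x) / 4 <= iota x.
Proof.
  intros Hu. set (u := cl x) in *. pose proof (cl_range Rr x ltac:(lra)). fold u in H.
  assert (1 <= x). { destruct (Rle_dec 1 x) as [|n]; auto. exfalso. unfold u in Hu. rewrite cl_low in Hu; lra. }
  assert (u <= x) by (apply cl_le; auto).
  assert (iota u <= iota x) by (apply iota_mono; lra).
  pose proof (iota_diff (u/2) u). pose proof (iota_nn (u/2) ltac:(lra)).
  assert ((u - u/2) * ((y-2)*u*rp u/2) <= RInt Jc (u/2) u).
  { apply int_lb_const. lra. apply ex_Jc. intros t Ht.
    rewrite Jc_eq by lra. rewrite cl_id by lra. rewrite Jp_big by lra.
    pose proof (rp_half u ltac:(lra)). pose proof (rp_mono (u/2) t ltac:(lra) ltac:(lra)).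
    pose proof (rp_pos u).
    assert (rp u / 2 <= rp t) by lra.
    assert (0 <= (y-2)) by lra.
    assert (u/2 * (rp u/2) <= t * rp t) by (apply Rmult_le_compat; lra).
    assert ((y-2) * (u/2 * (rp u/2)) <= (y-2) * (t * rp t)) by (apply Rmult_le_compat_l; lra).
    assert ((y-2) * (t * rp t) * 2 <= (y-2) * (t * rp t) * y).
    { apply Rmult_le_compat_l; [|lra]. apply Rmult_le_pos; [lra|]. apply Rmult_le_pos; lra. }
    nra. }
  nra.
Qed.

Lemma iota_ub1 t : 1 <= t <= 5/4 -> iota t <= 50*(t-1)^3.
Proof.
  intros Ht. pose proof (iota_diff 1 t). rewrite (iota_01 1) in H by lra.
  assert (RInt Jc 1 t <= (t - 1) * (50*(t-1)^2)).
  { apply int_ub_const. lra. apply ex_Jc. intros s Hs.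
    rewrite Jc_eq by lra. rewrite cl_id by lra. pose proof (Jp_near1 s ltac:(lra)).
    assert ((s-1)^2 <= (t-1)^2) by (apply pow_incr; lra). lra. }
  lra.
Qed.

Definition c3 := 3 + 12*M.

Lemma iota_ub x : 1 <= x -> iota x <= (y-2)*c3*x^2*rp (cl x).
Proof.
  intros Hx. rewrite iota_int.
  assert (RInt Jc 0 x <= (x - 0) * ((y-2)*c3*x*rp (cl x))).
  { apply int_ub_const. lra. apply ex_Jc. intros t Ht.
    rewrite Jc_eq by lra. pose proof (cl_range Rr t ltac:(lra)).
    pose proof (Jp_ub (cl t) ltac:(lra)).
    pose proof (cl_mono Rr t x ltac:(lra)). pose proof (cl_le x Hx).
    pose proof (rp_mono (cl t) (cl x) ltac:(lra) ltac:(lra)). pose proof (rp_pos (cl t)).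
    assert (0 <= (y-2)*c3) by (unfold c3; apply Rmult_le_pos; lra).
    assert (cl t * rp (cl t) <= x * rp (cl x)) by (apply Rmult_le_compat; lra).
    assert ((y-2)*c3 * (cl t * rp (cl t)) <= (y-2)*c3*(x * rp (cl x))) by (apply Rmult_le_compat_l; lra).
    unfold c3 in *. nra. }
  nra.
Qed.

Lemma cl_half x : cl x / 2 <= cl (x/2).
Proof. unfold Submission.cl, Rmax, Rmin. repeat destruct Rle_dec; lra. Qed.

Lemma rho_lb x : 0 <= x -> x^2 * rp (cl x) / 8 <= rho x ^2.
Proof.
  intros Hx. set (q := rp (cl x) / 2). pose proof (cl_range Rr x ltac:(lra)).
  assert (Hq : 0 < q) by (unfold q; pose proof (rp_pos (cl x)); lra).
  assert (E : (x - x/2) * sqrt q <= RInt (fun s => sqrt (Gt s)) (x/2) x).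
  { apply int_lb_const. lra. apply ex_RInt_cont. apply sqrtGt_cont. intros t Ht.
    apply sqrt_le_1_alt. pose proof (cl_range Rr t ltac:(lra)).
    unfold Gt. pose proof (DZ_gerp (cl t) ltac:(lra) ltac:(lra)).
    pose proof (cl_mono Rr (x/2) t ltac:(lra)). pose proof (cl_half x).
    pose proof (rp_mono (cl x / 2) (cl t) ltac:(lra) ltac:(lra)). pose proof (rp_half (cl x) ltac:(lra)).
    unfold q. lra. }
  assert (E2 : 0 <= RInt (fun s => sqrt (Gt s)) 0 (x/2)).
  { apply RInt_ge_0. lra. apply ex_RInt_cont. apply sqrtGt_cont. intros; apply sqrt_pos. }
  assert (E3 : rho x = RInt (fun s => sqrt (Gt s)) 0 (x/2) + RInt (fun s => sqrt (Gt s)) (x/2) x).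
  { unfold rho. rewrite <- ((@RInt_Chasles R_CompleteNormedModule) _ 0 (x/2) x); try (apply ex_RInt_cont; apply sqrtGt_cont). reflexivity. }
  assert (E4 : x/2 * sqrt q <= rho x) by lra.
  assert (0 <= x/2 * sqrt q) by (apply Rmult_le_pos; [lra|apply sqrt_pos]).
  assert (E5 : (x/2 * sqrt q)^2 <= rho x ^2) by (apply pow_incr; lra).
  replace ((x/2 * sqrt q)^2) with (x^2/4 * (sqrt q * sqrt q)) in E5 by field.
  rewrite sqrt_sqrt in E5 by lra. unfold q in E5. lra.
Qed.

Definition Kq := 8*c3 + c4 + 18.
Definition K0 := sqrt Kq.
Definition Dd x := if Rle_dec x 1 then 0 else Jc x / (2 * sqrt (iota x)).

Lemma c3_nn : 0 <= c3.
Proof. unfold c3. lra. Qed.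
Lemma c4_nn : 0 <= c4.
Proof. unfold c4. pose proof Cxi_nn. lra. Qed.
Lemma Kq_pos : 0 < Kq.
Proof. unfold Kq. pose proof c3_nn. pose proof c4_nn. lra. Qed.

Lemma iota_pos : 2 < y -> forall x, 1 < x -> 0 < iota x.
Proof.
  intros Hy2 x Hx. set (t := Rmin x (5/4)).
  assert (1 < t <= x /\ t <= 5/4) by (unfold t, Rmin; destruct Rle_dec; lra).
  assert (iota t <= iota x) by (apply iota_mono; lra).
  pose proof (iota_geP t ltac:(lra)) as G. rewrite cl_id in G by lra.
  pose proof (P_near1 t ltac:(lra)).
  assert (0 < (t-1)^3) by (apply pow_lt; lra).
  assert (0 < (y-2)*(t-1)^3) by (apply Rmult_lt_0_compat; lra). lra.
Qed.

Lemma sqrt_lt_bound v e : 0 <= v -> 0 <= e -> v < e^2 -> sqrt v < e.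
Proof.
  intros. rewrite <- (sqrt_pow2 e) by auto. apply sqrt_lt_1; auto. apply pow2_ge_0.
Qed.

Lemma dw_sI_low x : 0 <= x <= 1 -> deriv_within_nonneg_at (fun t => sqrt (iota t)) x 0.
Proof.
  intros Hx eps He. exists (Rmin (1/4) (eps^2/50)). split.
  apply Rmin_pos; [lra|]. assert (0 < eps^2) by (apply pow_lt; lra). lra.
  intros h Hh Hp Ha. rewrite (iota_01 x) by lra. rewrite sqrt_0.
  assert (Hh1 : Rabs h < 1/4) by (eapply Rlt_le_trans; [exact Ha|apply Rmin_l]).
  assert (Hh2 : Rabs h < eps^2/50) by (eapply Rlt_le_trans; [exact Ha|apply Rmin_r]).
  assert (Hab : 0 < Rabs h) by (apply Rabs_pos_lt; auto).
  replace ((sqrt (iota (x + h)) - 0) / h - 0) with (sqrt (iota (x+h)) / h) by (field; auto).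
  rewrite Rabs_div by auto. rewrite Rabs_pos_eq by apply sqrt_pos.
  apply Rmult_lt_reg_r with (Rabs h); auto. unfold Rdiv. rewrite Rmult_assoc, Rinv_l by lra. rewrite Rmult_1_r.
  destruct (Rle_dec (x+h) 1).
  - rewrite iota_01 by lra. rewrite sqrt_0. apply Rmult_lt_0_compat; lra.
  - assert (0 < x + h - 1 <= Rabs h) by (rabs; lra).
    pose proof (iota_ub1 (x+h) ltac:(rabs; lra)).
    pose proof (iota_nn (x+h) ltac:(lra)).
    apply sqrt_lt_bound; auto. apply Rmult_le_pos; lra.
    assert ((x+h-1)^3 <= Rabs h ^3) by (apply pow_incr; lra).
    assert (50 * Rabs h^3 < (eps * Rabs h)^2).
    { replace ((eps * Rabs h)^2) with (eps^2 * Rabs h^2) by ring.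
      replace (50 * Rabs h^3) with ((50 * Rabs h) * Rabs h^2) by ring.
      apply Rmult_lt_compat_r. apply pow_lt; auto. lra. }
    lra.
Qed.

Lemma dw_sI_high : 2 < y -> forall x, 1 < x -> deriv_within_nonneg_at (fun t => sqrt (iota t)) x (Jc x / (2 * sqrt (iota x))).
Proof.
  intros Hy2 x Hx. apply dw_of_dpl. apply is_derive_Reals.
  apply (is_derive_sqrt iota x (Jc x)). apply iota_der. apply iota_pos; auto.
Qed.

Lemma dw_ext (F G : R -> R) x l : 0 <= x -> (forall t, 0 <= t -> F t = G t) ->
  deriv_within_nonneg_at F x l -> deriv_within_nonneg_at G x l.
Proof.
  intros Hx E H eps He. destruct (H eps He) as [d [Hd K]]. exists d. split; auto.
  intros h Hh Hp Ha. rewrite <- !E by lra. apply K; auto.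
Qed.

Lemma Dd_der : 2 < y -> has_deriv_on_nonneg (fun x => sqrt (iotaR xi Rr x y)) Dd.
Proof.
  intros Hy2 x Hx. apply (dw_ext (fun t => sqrt (iota t))); auto.
  intros t Ht. rewrite iotaR_eq; auto.
  unfold Dd. destruct (Rle_dec x 1).
  - apply dw_sI_low. lra.
  - apply dw_sI_high; auto. lra.
Qed.

Lemma iota_cont x : continuous iota x.
Proof. apply (@ex_derive_continuous R_AbsRing R_NormedModule). exists (Jc x). apply iota_der. Qed.

Lemma F_cont : 2 < y -> forall x, 1 < x -> continuous (fun z => Jc z / (2 * sqrt (iota z))) x.
Proof.
  intros Hy2 x Hx. unfold Rdiv.
  apply (continuous_mult Jc (fun z => / (2 * sqrt (iota z)))). apply Jc_cont.
  apply (continuous_Rinv_comp (fun z => 2 * sqrt (iota z))).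
  apply (continuous_mult (fun _ => 2) (fun z => sqrt (iota z))). apply continuous_const.
  apply (continuous_comp iota sqrt). apply iota_cont. apply continuous_sqrt.
  pose proof (iota_pos Hy2 x Hx). pose proof (sqrt_lt_R0 _ H). lra.
Qed.

Lemma lt_of_sq a b : 0 <= b -> a^2 < b^2 -> a < b.
Proof. intros. destruct (Rlt_dec a b); auto. exfalso. assert (b <= a) by lra. assert (b^2 <= a^2) by (apply pow_incr; lra). lra. Qed.

Lemma Dd_cont : 2 < y -> continuous_on_nonneg Dd.
Proof.
  intros Hy2 x Hx eps He.
  destruct (Rlt_dec x 1).
  - exists (1 - x). split; [lra|]. intros z Hz Hzx. unfold Dd.
    destruct (Rle_dec z 1); [|rabs; lra]. destruct (Rle_dec x 1); [|lra]. rabs; lra.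
  - destruct (Req_dec x 1).
    + subst x. exists (Rmin (1/4) (eps^2*(y-2)/625)). split.
      { apply Rmin_pos; [lra|]. assert (0 < eps^2) by (apply pow_lt; lra).
        assert (0 < eps^2 * (y-2)) by (apply Rmult_lt_0_compat; lra). lra. }
      intros z Hz Hzx. 
      assert (Hz1 : Rabs (z - 1) < 1/4) by (eapply Rlt_le_trans; [exact Hzx|apply Rmin_l]).
      assert (Hz2 : Rabs (z - 1) < eps^2*(y-2)/625) by (eapply Rlt_le_trans; [exact Hzx|apply Rmin_r]).
      unfold Dd. destruct (Rle_dec 1 1); [|lra]. destruct (Rle_dec z 1). rabs; lra.
      assert (Hzz : 1 < z < 5/4) by (rabs; lra).
      assert (0 < z - 1 < eps^2*(y-2)/625) by (rabs; lra).
      pose proof (iota_pos Hy2 z ltac:(lra)) as Ip.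
      pose proof (iota_geP z ltac:(lra)) as G. rewrite cl_id in G by lra.
      pose proof (P_near1 z ltac:(lra)) as G2.
      rewrite Jc_eq by lra. rewrite cl_id by lra.
      pose proof (Jp_near1 z ltac:(lra)) as J1. pose proof (Jp_nn z ltac:(lra)) as J0.
      pose proof (sqrt_lt_R0 _ Ip) as Sp.
      assert (Q : Jp z < 2 * eps * sqrt (iota z)).
      { apply lt_of_sq. apply Rmult_le_pos; lra.
        replace ((2 * eps * sqrt (iota z))^2) with (4 * eps^2 * (sqrt (iota z) * sqrt (iota z))) by ring.
        rewrite sqrt_sqrt by lra.
        assert (Jp z ^2 <= (50 * (z-1)^2)^2) by (apply pow_incr; lra).
        set (w := z - 1) in *.
        assert (0 < w^3) by (apply pow_lt; lra).
        assert ((50*w^2)^2 = 2500 * w * w^3) by ring.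
        assert (2500 * w < 4 * eps^2 * (y-2)) by lra.
        assert (2500 * w * w^3 < 4 * eps^2 * (y-2) * w^3) by (apply Rmult_lt_compat_r; lra).
        assert (0 <= 4 * eps^2) by (assert (0 <= eps^2) by apply pow2_ge_0; lra).
        assert (4 * eps^2 * ((y-2) * w^3) <= 4 * eps^2 * iota z) by (apply Rmult_le_compat_l; lra).
        nra. }
      assert (0 <= Jp z / (2 * sqrt (iota z))) by (apply Rdiv_le_0_compat; lra).
      assert (Jp z / (2 * sqrt (iota z)) < eps).
      { apply Rmult_lt_reg_r with (2 * sqrt (iota z)). lra. unfold Rdiv. rewrite Rmult_assoc, Rinv_l by lra. lra. }
      rabs; lra.
    + assert (Hxg : 1 < x) by lra.
      pose proof (F_cont Hy2 x Hxg) as Fc. apply continuity_pt_filterlim in Fc.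
      destruct (Fc eps He) as [alp [Ha Hal]].
      exists (Rmin alp (x - 1)). split. apply Rmin_pos; lra.
      intros z Hz Hzx.
      assert (Hz1 : Rabs (z - x) < alp) by (eapply Rlt_le_trans; [exact Hzx|apply Rmin_l]).
      assert (Hz2 : Rabs (z - x) < x - 1) by (eapply Rlt_le_trans; [exact Hzx|apply Rmin_r]).
      unfold Dd. destruct (Rle_dec z 1). rabs; lra. destruct (Rle_dec x 1). lra.
      destruct (Req_dec z x). subst. rewrite Rminus_diag, Rabs_R0. auto.
      apply (Hal z). split. split. constructor. auto. simpl. unfold R_dist. auto.
Qed.

Lemma rho_nn x : 0 <= x -> 0 <= rho x.
Proof. intros. apply RInt_ge_0; auto. apply ex_RInt_cont, sqrtGt_cont. intros; apply sqrt_pos. Qed.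

Lemma iota_bound x : 0 <= x -> sqrt (iota x) <= K0 * sqrt (y - 2) * rho x.
Proof.
  intros Hx. pose proof (rho_nn x Hx). pose proof Kq_pos.
  assert (0 <= K0 * sqrt (y-2) * rho x) by (unfold K0; repeat apply Rmult_le_pos; auto; apply sqrt_pos).
  destruct (Rle_dec x 1).
  - rewrite iota_01 by lra. rewrite sqrt_0. auto.
  - pose proof (iota_ub x ltac:(lra)). pose proof (rho_lb x Hx).
    pose proof c3_nn.
    assert (iota x <= Kq * (y-2) * rho x ^2).
    { assert (0 <= (y-2)*c3) by (apply Rmult_le_pos; lra).
      assert ((y-2)*c3*(x^2*rp (cl x)) <= (y-2)*c3*(8 * rho x^2)) by (apply Rmult_le_compat_l; lra).
      assert (0 <= (y-2) * rho x^2) by (apply Rmult_le_pos; [lra|apply pow2_ge_0]).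
      assert (8*c3 <= Kq) by (unfold Kq; pose proof c4_nn; lra).
      assert (8*c3 * ((y-2)*rho x^2) <= Kq * ((y-2)*rho x^2)) by (apply Rmult_le_compat_r; lra).
      nra. }
    replace (K0 * sqrt (y-2) * rho x) with (sqrt (Kq * (y-2) * rho x^2)).
    apply sqrt_le_1_alt. auto.
    unfold K0. rewrite !sqrt_mult; try lra; try (apply Rmult_le_pos; lra); try apply pow2_ge_0.
    rewrite sqrt_pow2 by auto. reflexivity.
Qed.

Lemma Dd_bound : 2 < y -> forall x, 0 <= x -> 0 <= Dd x <= K0 * sqrt (y-2) * sqrt (Gt x).
Proof.
  intros Hy2 x Hx. pose proof Kq_pos.
  assert (R0 : 0 <= K0 * sqrt (y-2) * sqrt (Gt x)) by (unfold K0; repeat apply Rmult_le_pos; apply sqrt_pos).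
  unfold Dd. destruct (Rle_dec x 1). lra.
  pose proof (iota_pos Hy2 x ltac:(lra)) as Ip. pose proof (sqrt_lt_R0 _ Ip) as Sp.
  pose proof (Jc_nn x Hx) as J0.
  assert (Key : Jc x ^2 <= 4 * Kq * (y-2) * Gt x * iota x).
  { rewrite Jc_eq by lra. unfold Gt. pose proof (cl_range Rr x ltac:(lra)) as Cr.
    pose proof (iota_geP x ltac:(lra)) as IG. set (u := cl x) in *. pose proof (DZ_ge2 u ltac:(lra)).
    assert (0 <= (y-2) * DZ u) by (apply Rmult_le_pos; lra).
    destruct (Rle_dec u 4).
    - pose proof (Jp_sq u ltac:(lra)).
      assert (c4 <= 4 * Kq) by (unfold Kq; pose proof c3_nn; pose proof c4_nn; lra).
      assert (c4 * ((y-2) * DZ u * P u) <= c4 * ((y-2)*DZ u * iota x)) by (apply Rmult_le_compat_l; [apply c4_nn| apply Rmult_le_compat_l; lra]).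
      assert (0 <= (y-2) * DZ u * iota x) by (apply Rmult_le_pos; lra).
      assert (c4 * ((y-2)*DZ u * iota x) <= 4 * Kq * ((y-2)*DZ u * iota x)) by (apply Rmult_le_compat_r; lra).
      nra.
    - rewrite Jp_big by lra. pose proof (iota_gebig x ltac:(fold u; lra)) as IB. fold u in IB.
      pose proof (DZ_ge2rp u ltac:(lra)). pose proof (rp_pos u).
      set (r := rp u) in *. assert (Ha0 : 0 <= y - 2) by lra. set (a := y - 2) in *.
      assert (0 <= a * u^2 * r / 4) by (unfold Rdiv; repeat apply Rmult_le_pos; try lra; apply pow2_ge_0).
      assert (a * (2*r) * (a * u^2 * r / 4) <= a * DZ u * iota x).
      { apply Rmult_le_compat; try lra. apply Rmult_le_pos; lra. apply Rmult_le_compat_l; lra. }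
      assert ((u*y*a*r)^2 <= 18 * (a * (2*r) * (a * u^2 * r / 4))).
      { replace (18 * (a * (2*r) * (a * u^2 * r / 4))) with (9 * (a*u*r)^2) by field.
        replace ((u*y*a*r)^2) with (y^2 * (a*u*r)^2) by ring.
        apply Rmult_le_compat_r. apply pow2_ge_0. nra. }
      assert (18 <= 4 * Kq) by (unfold Kq; pose proof c3_nn; pose proof c4_nn; lra).
      assert (0 <= a * DZ u * iota x) by (apply Rmult_le_pos; lra).
      assert (18 * (a * DZ u * iota x) <= 4 * Kq * (a * DZ u * iota x)) by (apply Rmult_le_compat_r; lra).
      nra. }
  split. apply Rdiv_le_0_compat; lra.
  assert (Jc x <= 2 * (K0 * sqrt (y - 2) * sqrt (Gt x)) * sqrt (iota x)).
  { replace (2 * (K0 * sqrt (y - 2) * sqrt (Gt x)) * sqrt (iota x)) with (sqrt (4 * Kq * (y-2) * Gt x * iota x)).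
    rewrite <- (sqrt_pow2 (Jc x)) by auto. apply sqrt_le_1_alt. auto.
    pose proof (Gt_ge2 x). pose proof (iota_nn x Hx).
    unfold K0. rewrite !sqrt_mult; try lra; repeat (apply Rmult_le_pos; try lra).
    replace (sqrt 4) with 2. ring. rewrite <- (sqrt_pow2 2) by lra. f_equal. ring. }
  apply Rmult_le_reg_r with (2 * sqrt (iota x)). lra.
  unfold Rdiv. rewrite Rmult_assoc, Rinv_l by lra. lra.
Qed.

Lemma y2_Jc : y = 2 -> forall x, 0 <= x -> Jc x = 0.
Proof.
  intros E x Hx. rewrite Jc_eq by auto. pose proof (cl_range Rr x ltac:(lra)).
  rewrite Jp_form by lra. unfold rp. rewrite E. replace (2-2) with 0 by ring. rewrite Rmult_0_l, exp_0. ring.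
Qed.

Lemma y2_iota : y = 2 -> forall x, 0 <= x -> iota x = 0.
Proof.
  intros E x Hx. rewrite iota_int. rewrite ((@RInt_ext R_CompleteNormedModule) Jc (fun _ => 0)).
  rewrite (@RInt_const R_CompleteNormedModule). unfold scal; simpl; unfold mult; simpl. ring.
  intros t Ht. rewrite Rmin_left, Rmax_right in Ht by lra. apply y2_Jc; auto. lra.
Qed.

Lemma main_sec : exists D : R -> R,
        has_deriv_on_nonneg (fun x => sqrt (iotaR xi Rr x y)) D /\
        continuous_on_nonneg D /\
        forall x : R, 0 <= x ->
          (0 <= D x <= K0 * sqrt (y - 2) * gR xi Rr x y) /\
          (0 <= sqrt (iotaR xi Rr x y) <= K0 * sqrt (y - 2) * rhoR xi Rr x y).
Proof.
  assert (Hib : forall x, 0 <= x -> 0 <= sqrt (iotaR xi Rr x y) <= K0 * sqrt (y - 2) * rhoR xi Rr x y).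
  { intros x Hx. rewrite iotaR_eq, rhoR_eq by auto. split. apply sqrt_pos. apply iota_bound; auto. }
  destruct (Req_dec y 2) as [E|NE].
  - exists (fun _ => 0). split; [|split].
    + intros x Hx eps He. exists 1. split; [lra|]. intros h Hh Hp Ha.
      rewrite !iotaR_eq by lra. rewrite !y2_iota by (auto; lra). rewrite sqrt_0.
      replace ((0 - 0) / h - 0) with 0 by (field; auto). rewrite Rabs_R0. auto.
    + intros x Hx eps He. exists 1. split; [lra|]. intros. rewrite Rminus_diag, Rabs_R0. auto.
    + intros x Hx. split; auto. split; [lra|]. unfold K0, gR. repeat apply Rmult_le_pos; apply sqrt_pos.
  - assert (Hy2 : 2 < y) by lra. exists Dd. split; [|split].
    + apply Dd_der; auto.
    + apply Dd_cont; auto.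
    + intros x Hx. split; auto. rewrite gR_eq by auto. apply Dd_bound; auto.
Qed.

End ALL.

Theorem mainTheorem17 (xi : R -> R) (Hxi : xi_hyp xi) :
  exists K0 : R, 0 < K0 /\
    forall Rr y : R, 2 < Rr -> 2 <= y <= 3 ->
      exists D : R -> R,
        has_deriv_on_nonneg (fun x => sqrt (iotaR xi Rr x y)) D /\
        continuous_on_nonneg D /\
        forall x : R, 0 <= x ->
          (0 <= D x <= K0 * sqrt (y - 2) * gR xi Rr x y) /\
          (0 <= sqrt (iotaR xi Rr x y) <= K0 * sqrt (y - 2) * rhoR xi Rr x y).
Proof.
  destruct Hxi as [H1 [H2 [H3 [xi1 [xi2 [D1 [D2 _]]]]]]].
  destruct (xi1_bound xi xi1 xi2 H3 D1 D2) as [M [HM0 HM]].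
  exists (K0 M). split.
  - unfold K0. apply sqrt_lt_R0. apply Kq_pos; auto.
  - intros Rr y HR Hy. eapply main_sec; eauto.
Qed.
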